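(* Let $H$ be a separable complex Hilbert space, $(\Omega,\mu)$ a measure space with positive measure, and let $K\in B(H)$ have closed range. Let $F:\Omega\to H$ be a Parseval continuous $K$-frame of $H$. Then $K^{\dagger}F$ is the canonical dual continuous $K$-Bessel sequence of $F$; that is, $K^{\dagger}F$ is a dual continuous $K$-Bessel sequence of $F$ and $\|T_{K^{\dagger}F}\|\le\|T_G\|$ for every dual continuous $K$-Bessel sequence $G$ of $F$, where $T_{K^\dagger F}$ and $T_G$ denote the analysis operators of $K^{\dagger}F$ and $G$.
   Context: A map $F:\Omega\to H$ is weakly measurable if $\omega\mapsto\langle f,F(\omega)\rangle$ is measurable for every $f\in H$. A continuous Bessel sequence is a weakly measurable $G$ with $\int_\Omega|\langle f,G(\omega)\rangle|^2\,d\mu(\omega)\le B\|f\|^2$ for all $f\in H$, for some $B>0$; its analysis operator is $T_G:H\to L^2(\Omega,\mu)$, $T_Gf=\{\langle f,G(\omega)\rangle\}_{\omega}$. A Parseval continuous $K$-frame is a weakly measurable $F$ with $\int_\Omega|\langle f,F(\omega)\rangle|^2\,d\mu(\omega)=\|K^{\ast}f\|^2$ for all $f\in H$. A dual continuous $K$-Bessel sequence of $F$ is a continuous Bessel sequence $G$ with $Kf=\int_\Omega\langle f,G(\omega)\rangle F(\omega)\,d\mu(\omega)$ for all $f\in H$. $K^{\dagger}$ denotes the Moore–Penrose pseudo-inverse of the closed-range operator $K$. *)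

(* Defs.v *)
From HB Require Import structures.
From mathcomp Require Import all_boot all_order all_algebra.
From mathcomp Require Import all_classical all_reals all_analysis.
From mathcomp Require Import complex.
Set Implicit Arguments. Unset Strict Implicit. Unset Printing Implicit Defensive.
Import Order.TTheory GRing.Theory Num.Theory.
Local Open Scope ring_scope.
Local Open Scope classical_set_scope.

Section HilbertDefs.
Context {R : realType} {H : lmodType R[i]}.
Variable ip : H -> H -> R[i].  (* inner product <x, y>, linear in x *)

Definition nrm2 (x : H) : R := complex.Re (ip x x).

Definition cabs2 (z : R[i]) : R := complex.Re z ^+ 2 + complex.Im z ^+ 2.

Definition is_inner_product : Prop :=
  [/\ (forall (a : R[i]) (x y z : H), ip (a *: x + y) z = a * ip x z + ip y z),
      (forall x y : H, ip y x = (ip x y)^*),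
      (forall x : H, 0 <= ip x x) &
      (forall x : H, ip x x = 0 -> x = 0)].

Definition is_complete : Prop :=
  forall u : nat -> H,
    (forall eps : R, 0 < eps -> exists N : nat, forall m n : nat,
        (N <= m)%N -> (N <= n)%N -> nrm2 (u m - u n) < eps) ->
    exists l : H, forall eps : R, 0 < eps -> exists N : nat, forall n : nat,
        (N <= n)%N -> nrm2 (u n - l) < eps.

Definition is_separable : Prop :=
  exists e : nat -> H, forall (x : H) (eps : R), 0 < eps ->
    exists n : nat, nrm2 (x - e n) < eps.

Definition is_sep_hilbert : Prop :=
  [/\ is_inner_product, is_complete & is_separable].

Definition bounded_op (T : H -> H) : Prop :=
  (forall (a : R[i]) (x y : H), T (a *: x + y) = a *: T x + T y) /\
  exists M : R, forall x : H, nrm2 (T x) <= M * nrm2 x.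

Definition closed_range (T : H -> H) : Prop :=
  forall (u : nat -> H) (y : H),
    (forall eps : R, 0 < eps -> exists N : nat, forall n : nat,
        (N <= n)%N -> nrm2 (T (u n) - y) < eps) ->
    exists x : H, T x = y.

Definition is_adjoint (T Tadj : H -> H) : Prop :=
  forall x y : H, ip (T x) y = ip x (Tadj y).

Definition is_MP_inverse (T Tdag : H -> H) : Prop :=
  [/\ bounded_op Tdag,
      (forall x, T (Tdag (T x)) = T x),
      (forall x, Tdag (T (Tdag x)) = Tdag x),
      (forall x y, ip (T (Tdag x)) y = ip x (T (Tdag y))) &
      (forall x y, ip (Tdag (T x)) y = ip x (Tdag (T y)))].

Context {d : measure_display} {Omega : measurableType d}.
Variable mu : {measure set Omega -> \bar R}.

Definition weakly_measurable (F : Omega -> H) : Prop :=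
  forall f : H,
    measurable_fun setT (fun w => complex.Re (ip f (F w))) /\
    measurable_fun setT (fun w => complex.Im (ip f (F w))).

Definition sq_coeff_int (G : Omega -> H) (f : H) : \bar R :=
  (\int[mu]_(w in setT) (cabs2 (ip f (G w)))%:E)%E.

Definition cont_Bessel (G : Omega -> H) : Prop :=
  weakly_measurable G /\
  exists B : R, 0 < B /\ forall f : H, (sq_coeff_int G f <= (B * nrm2 f)%:E)%E.

Definition parseval_cont_Kframe (Kadj : H -> H) (F : Omega -> H) : Prop :=
  weakly_measurable F /\
  forall f : H, sq_coeff_int F f = (nrm2 (Kadj f))%:E.

Definition cintegrable (h : Omega -> R[i]) : Prop :=
  mu.-integrable setT (fun w => (complex.Re (h w))%:E) /\
  mu.-integrable setT (fun w => (complex.Im (h w))%:E).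

Definition cintegral (h : Omega -> R[i]) : R[i] :=
  Complex (fine (\int[mu]_(w in setT) (complex.Re (h w))%:E)%E)
          (fine (\int[mu]_(w in setT) (complex.Im (h w))%:E)%E).

(* G is a dual continuous K-Bessel sequence of F :
   K f = int <f, G w> F w dmu (weakly: tested against every g) *)
Definition dual_cont_KBessel (K : H -> H) (F G : Omega -> H) : Prop :=
  cont_Bessel G /\
  forall f g : H,
    cintegrable (fun w => ip f (G w) * ip (F w) g) /\
    ip (K f) g = cintegral (fun w => ip f (G w) * ip (F w) g).

(* squared operator norm of the analysis operator T_G : H -> L^2(Omega, mu):
   ||T_G||^2 = sup_{||f|| <= 1} ||T_G f||^2 *)
Definition analysis_opnorm2 (G : Omega -> H) : \bar R :=
  ereal_sup [set sq_coeff_int G f | f in [set f : H | nrm2 f <= 1]].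

End HilbertDefs.

(* Main.v *)
Require Import Defs.
From HB Require Import structures.
From mathcomp Require Import all_boot all_order all_algebra.
From mathcomp Require Import all_classical all_reals all_analysis.
From mathcomp Require Import complex.
From mathcomp Require Import ring lra.
Import Order.TTheory GRing.Theory Num.Theory.
Local Open Scope ring_scope.
Local Open Scope classical_set_scope.

Section Cplx.
Context {R : realType}.
Implicit Types z w : R[i].
Lemma cE z : z = Complex (complex.Re z) (complex.Im z). Proof. by case: z. Qed.
Lemma cext z w : complex.Re z = complex.Re w -> complex.Im z = complex.Im w -> z = w.
Proof. by case: z => a b; case: w => c e /= -> ->. Qed.
Lemma ReD z w : complex.Re (z + w) = complex.Re z + complex.Re w. Proof. by case: z; case: w. Qed.
Lemma ImD z w : complex.Im (z + w) = complex.Im z + complex.Im w. Proof. by case: z; case: w. Qed.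
Lemma ReN z : complex.Re (- z) = - complex.Re z. Proof. by case: z. Qed.
Lemma ImN z : complex.Im (- z) = - complex.Im z. Proof. by case: z. Qed.
Lemma ReB z w : complex.Re (z - w) = complex.Re z - complex.Re w. Proof. by rewrite ReD ReN. Qed.
Lemma ImB z w : complex.Im (z - w) = complex.Im z - complex.Im w. Proof. by rewrite ImD ImN. Qed.
Lemma ReM z w : complex.Re (z * w) = complex.Re z * complex.Re w - complex.Im z * complex.Im w.
Proof. by case: z; case: w. Qed.
Lemma ImM z w : complex.Im (z * w) = complex.Re z * complex.Im w + complex.Im z * complex.Re w.
Proof. by case: z; case: w. Qed.
Lemma ReJ z : complex.Re (Num.conj z) = complex.Re z. Proof. by case: z. Qed.
Lemma ImJ z : complex.Im (Num.conj z) = - complex.Im z. Proof. by case: z. Qed.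
Lemma Re0 : complex.Re (0 : R[i]) = 0. Proof. by []. Qed.
Lemma Im0 : complex.Im (0 : R[i]) = 0. Proof. by []. Qed.
Lemma Re1 : complex.Re (1 : R[i]) = 1. Proof. by []. Qed.
Lemma Im1 : complex.Im (1 : R[i]) = 0. Proof. by []. Qed.
Lemma ReC (a b : R) : complex.Re (Complex a b) = a. Proof. by []. Qed.
Lemma ImC (a b : R) : complex.Im (Complex a b) = b. Proof. by []. Qed.
Lemma ge0_cE {z} : 0 <= z -> complex.Im z = 0 /\ 0 <= complex.Re z.
Proof. by rewrite lecE => /andP[/eqP h ->]; split => //; rewrite h. Qed.
End Cplx.
Ltac csimp := rewrite ?(ReD, ImD, ReN, ImN, ReM, ImM, ReJ, ImJ, Re0, Im0, Re1, Im1, ReC, ImC).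

Section IP.
Context {R : realType} {H : lmodType R[i]} {ip : H -> H -> R[i]} (hip : is_inner_product ip).
Local Notation Re := complex.Re.
Local Notation Im := complex.Im.

Lemma ipDZl a x y z : ip (a *: x + y) z = a * ip x z + ip y z.
Proof. by case: hip. Qed.
Lemma ipC x y : ip y x = Num.conj (ip x y).
Proof. by case: hip. Qed.
Lemma ip0l z : ip 0 z = 0.
Proof.
have := ipDZl 1 0 0 z; rewrite scale1r addr0 mul1r.
by move/(congr1 (fun t => t - ip 0 z)); rewrite subrr addrK => /esym.
Qed.
Lemma ipDl x y z : ip (x + y) z = ip x z + ip y z.
Proof. by have := ipDZl 1 x y z; rewrite scale1r mul1r. Qed.
Lemma ipZl a x z : ip (a *: x) z = a * ip x z.
Proof. by have := ipDZl a x 0 z; rewrite !addr0 ip0l addr0. Qed.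
Lemma ipNl x z : ip (- x) z = - ip x z.
Proof. by rewrite -scaleN1r ipZl mulN1r. Qed.
Lemma ipBl x y z : ip (x - y) z = ip x z - ip y z.
Proof. by rewrite ipDl ipNl. Qed.
Lemma ip0r z : ip z 0 = 0.
Proof. by rewrite ipC ip0l conjC0. Qed.
Lemma ipDr z x y : ip z (x + y) = ip z x + ip z y.
Proof. by rewrite !(ipC _ z) ipDl; apply: cext; csimp; ring. Qed.
Lemma ipZr z a x : ip z (a *: x) = Num.conj a * ip z x.
Proof. by rewrite !(ipC _ z) ipZl; apply: cext; csimp; ring. Qed.
Lemma ipNr z x : ip z (- x) = - ip z x.
Proof. by rewrite !(ipC _ z) ipNl; apply: cext; csimp; ring. Qed.
Lemma ipBr z x y : ip z (x - y) = ip z x - ip z y.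
Proof. by rewrite ipDr ipNr. Qed.

Lemma ipxx x : ip x x = Complex (nrm2 ip x) 0.
Proof.
case: hip => _ _ h _; have [hi hr] := ge0_cE (h x).
by apply: cext.
Qed.
Lemma nrm2_ge0 x : 0 <= nrm2 ip x.
Proof. by case: hip => _ _ h _; have [hi hr] := ge0_cE (h x). Qed.
Lemma nrm2_eq0 x : nrm2 ip x = 0 -> x = 0.
Proof. by case: hip => _ _ _ h e; apply: h; rewrite ipxx e. Qed.
Lemma ip_ext u v : (forall x, ip x u = ip x v) -> u = v.
Proof.
move=> e; apply/eqP; rewrite -subr_eq0; apply/eqP.
by case: hip => _ _ _ h; apply: h; rewrite ipBr e subrr.
Qed.

Lemma nrm2DZ x y c : nrm2 ip (x + c *: y) =
  nrm2 ip x + cabs2 c * nrm2 ip y + 2 * Re (Num.conj c * ip x y).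
Proof.
rewrite /nrm2 ipDl !ipDr !ipZl !ipZr (ipC y x) (ipxx y).
rewrite /cabs2; csimp; ring.
Qed.

Lemma nrm2N x : nrm2 ip (- x) = nrm2 ip x.
Proof. by rewrite /nrm2 ipNl ipNr opprK. Qed.
Lemma nrm2Z c x : nrm2 ip (c *: x) = cabs2 c * nrm2 ip x.
Proof. by rewrite /nrm2 ipZl ipZr ipxx /cabs2; csimp; ring. Qed.
Lemma nrm2D x y : nrm2 ip (x + y) = nrm2 ip x + nrm2 ip y + 2 * Re (ip x y).
Proof. by have := nrm2DZ x y 1; rewrite scale1r => ->; rewrite /cabs2; csimp; ring. Qed.
Lemma nrm2B x y : nrm2 ip (x - y) = nrm2 ip x + nrm2 ip y - 2 * Re (ip x y).
Proof. by rewrite nrm2D nrm2N ipNr; csimp; ring. Qed.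
Lemma parallelogram x y : nrm2 ip (x + y) + nrm2 ip (x - y) = 2 * nrm2 ip x + 2 * nrm2 ip y.
Proof. by rewrite nrm2D nrm2B; ring. Qed.

Lemma cabs2_ge0 (c : R[i]) : 0 <= cabs2 c.
Proof. by rewrite /cabs2 addr_ge0 // sqr_ge0. Qed.
Lemma cabs2_eq0 (c : R[i]) : cabs2 c = 0 -> c = 0.
Proof.
rewrite /cabs2 => h.
have hr : Re c ^+ 2 = 0 by have := sqr_ge0 (Re c); have := sqr_ge0 (Im c); lra.
have hi : Im c ^+ 2 = 0 by have := sqr_ge0 (Re c); have := sqr_ge0 (Im c); lra.
move/eqP: hr; rewrite sqrf_eq0 => /eqP hr; move/eqP: hi; rewrite sqrf_eq0 => /eqP hi.
by apply: cext.
Qed.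

Lemma cauchy_schwarz a b : cabs2 (ip a b) <= nrm2 ip a * nrm2 ip b.
Proof.
have [n0|nn0] := eqVneq (nrm2 ip b) 0.
  by rewrite n0 mulr0 (@nrm2_eq0 b n0) ip0r /cabs2; csimp; rewrite expr0n /= addr0.
have np : 0 < nrm2 ip b by rewrite lt_def nn0 nrm2_ge0.
set u := Re (ip a b); set v := Im (ip a b).
pose c : R[i] := Complex (- u / nrm2 ip b) (- v / nrm2 ip b).
have e : nrm2 ip (a + c *: b) = nrm2 ip a - (u ^+ 2 + v ^+ 2) / nrm2 ip b.
  rewrite nrm2DZ /cabs2 /c; csimp; rewrite -/u -/v; field; exact: nn0.
have := nrm2_ge0 (a + c *: b); rewrite e subr_ge0 ler_pdivrMr //.
Qed.

Lemma young a b t : 0 < t -> 2 * Re (ip a b) <= t * nrm2 ip a + nrm2 ip b / t.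
Proof.
move=> tp.
have := nrm2_ge0 (b + (Complex (- t) 0) *: a); rewrite nrm2DZ (ipC a b) /cabs2; csimp.
move=> h; rewrite -(ler_pM2l tp) mulrDr.
have -> : t * (nrm2 ip b / t) = nrm2 ip b by field; rewrite gt_eqF.
move: h; set N := nrm2 ip a; set M := nrm2 ip b; set w := Re (ip a b); nra.
Qed.

Lemma nrm2D_young x y t : 0 < t ->
  nrm2 ip (x + y) <= (1 + t) * nrm2 ip x + (1 + t^-1) * nrm2 ip y.
Proof.
move=> tp; rewrite nrm2D; have := young x y t tp; rewrite mulrDl mulrDl !mul1r.
rewrite mulrC; lra.
Qed.
End IP.

Section Real.
Context {R : realType}.
Lemma small0 (r : R) : 0 <= r -> (forall e, 0 < e -> r <= e) -> r = 0.
Proof.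
move=> r0 h; apply/eqP; rewrite eq_le r0 andbT; apply/ler_addgt0Pr => e ep.
by rewrite add0r; exact: h.
Qed.
Lemma inv_small (e : R) : 0 < e -> exists N : nat, forall n, (N <= n)%N -> (n.+1%:R)^-1 < e.
Proof.
move=> ep; exists (Num.truncn e^-1) => n hn.
have h1 := truncnS_gt e^-1.
have h2 : (Num.truncn e^-1).+1%:R <= n.+1%:R :> R by rewrite ler_nat ltnS.
rewrite -[e]invrK ltf_pV2 ?posrE ?invr_gt0 ?ltr0Sn //.
exact: lt_le_trans h1 h2.
Qed.
End Real.

Section Riesz.
Context {R : realType} {H : lmodType R[i]} {ip : H -> H -> R[i]} (hip : is_inner_product ip)
  (hc : is_complete ip).
Local Notation Re := complex.Re.
Local Notation Im := complex.Im.

Lemma riesz (phi : H -> R[i]) (C : R) :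
  (forall a x y, phi (a *: x + y) = a * phi x + phi y) ->
  (forall x, cabs2 (phi x) <= C * nrm2 ip x) ->
  exists z, forall y, phi y = ip y z.
Proof.
move=> hlin hb.
have phi0 : phi 0 = 0.
  have := hlin 1 0 0; rewrite scale1r addr0 mul1r.
  by move/(congr1 (fun t => t - phi 0)); rewrite subrr addrK => /esym.
have phiD x y : phi (x + y) = phi x + phi y by have := hlin 1 x y; rewrite scale1r mul1r.
have phiZ a x : phi (a *: x) = a * phi x by have := hlin a x 0; rewrite !addr0 phi0 addr0.
have phiN x : phi (- x) = - phi x by rewrite -scaleN1r phiZ mulN1r.
have phiB x y : phi (x - y) = phi x - phi y by rewrite phiD phiN.
case: (pselect (exists y0, phi y0 != 0)) => [[y0 hy0]|hno]; last first.
  exists 0 => y; rewrite (ip0r hip); apply/eqP/negP => h; apply: hno.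
  by exists y; apply/negP.
pose x0 := (phi y0)^-1 *: y0.
have hx0 : phi x0 = 1 by rewrite phiZ mulVf.
pose A := [set x | phi x = 1].
pose S := [set nrm2 ip x | x in A].
have S0 : S !=set0 by exists (nrm2 ip x0); exists x0.
have Slb : lbound S 0 by move=> _ [x _ <-]; exact: (nrm2_ge0 hip x).
have hinf : has_inf S by split => //; exists 0.
set d := inf S.
have d0 : 0 <= d by apply: lb_le_inf.
have dle x : A x -> d <= nrm2 ip x.
  by move=> Ax; apply: ge_inf; [exists 0 | exists x].
have hseq k : exists x, A x /\ nrm2 ip x < d + (k.+1%:R)^-1.
  have kp : 0 < (k.+1%:R : R)^-1 by rewrite invr_gt0 ltr0Sn.
  have [_ [x Ax <-] h] := inf_adherent kp hinf.
  by exists x.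
have [xs hxs] := choice hseq.
have half : (2^-1 : R[i]) + 2^-1 = 1 by rewrite {3}(splitr 1) mul1r.
have mid m n : A ((2^-1 : R[i]) *: (xs m + xs n)).
  by rewrite /A /= phiZ phiD (hxs m).1 (hxs n).1 mulrDr mulr1.
have hcau m n : nrm2 ip (xs m - xs n) <= 2 * (m.+1%:R)^-1 + 2 * (n.+1%:R)^-1.
  have hp := parallelogram hip (xs m) (xs n).
  set mm := (2^-1 : R[i]) *: (xs m + xs n).
  have e2 : xs m + xs n = mm + mm by rewrite /mm -scalerDl half scale1r.
  have h4 : nrm2 ip (xs m + xs n) = 4 * nrm2 ip mm.
    by rewrite e2 (nrm2D hip) {3}/nrm2 (ipxx hip); csimp; ring.
  have := dle _ (mid m n); have := (hxs m).2; have := (hxs n).2.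
  rewrite -/mm; move: (m.+1%:R^-1 : R) (n.+1%:R^-1 : R) => a b; lra.
have [u hu] : exists u, forall eps, 0 < eps -> exists N, forall n, (N <= n)%N ->
    nrm2 ip (xs n - u) < eps.
  apply: hc => eps ep.
  have e4 : 0 < eps / 4 by rewrite divr_gt0.
  have [N hN] := inv_small _ e4.
  exists N => m n hm hn; apply: le_lt_trans (hcau m n) _.
  have := hN m hm; have := hN n hn.
  move: (m.+1%:R^-1 : R) (n.+1%:R^-1 : R) => a b; lra.
have hu1 : phi u = 1.
  apply/eqP; rewrite -subr_eq0; apply/eqP; apply: cabs2_eq0.
  apply: small0; first exact: cabs2_ge0.
  move=> e ep.
  have Cp : 0 < `|C| + 1 by rewrite ltr_wpDl.
  have [N hN] := hu (e / (`|C| + 1)) (divr_gt0 ep Cp).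
  have h1 := hN N (leqnn N).
  have -> : phi u - 1 = phi (u - xs N) by rewrite phiB (hxs N).1.
  have h2 := hb (u - xs N).
  have e' : nrm2 ip (u - xs N) = nrm2 ip (xs N - u) by rewrite -opprB (nrm2N hip).
  rewrite e' in h2.
  rewrite ltr_pdivlMr // in h1.
  have h3 : C * nrm2 ip (xs N - u) <= (`|C| + 1) * nrm2 ip (xs N - u).
    by apply: ler_wpM2r; [exact: nrm2_ge0 | have := ler_norm C; lra].
  lra.
have hmin : nrm2 ip u <= d.
  apply/ler_addgt0Pr => eta etap.
  pose t := eta / (3 * (d + 1)).
  have tp : 0 < t by rewrite divr_gt0 // mulr_gt0 // ltr_wpDl.
  have td : t * (d + 1) = eta / 3.
    by rewrite /t; field; rewrite gt_eqF // (ltr_wpDl d0 ltr01).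
  pose s := 1 + t^-1.
  have sp : 0 < s by rewrite /s addr_gt0 // invr_gt0.
  pose e0 := eta / (3 * s).
  have e0p : 0 < e0 by rewrite divr_gt0 // mulr_gt0.
  have se0 : s * e0 = eta / 3 by rewrite /e0; field; rewrite gt_eqF.
  have mp : 0 < Num.min (eta / 3) 1 by rewrite lt_min divr_gt0 ?ltr01.
  have [N1 hN1] := inv_small _ mp.
  have [N2 hN2] := hu e0 e0p.
  pose n := maxn N1 N2.
  have h1 := hN1 n (leq_maxl _ _); have h2 := hN2 n (leq_maxr _ _).
  have hx := (hxs n).2.
  rewrite lt_min in h1; case/andP: h1 => h1a h1b.
  have := nrm2D_young hip (xs n) (u - xs n) t tp.
  have -> : xs n + (u - xs n) = u by rewrite addrC subrK.
  rewrite -opprB (nrm2N hip) -/s.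
  have hX : (1 + t) * nrm2 ip (xs n) <= (1 + t) * (d + n.+1%:R^-1).
    by apply: ler_wpM2l; [lra | exact: ltW].
  have hY : s * nrm2 ip (xs n - u) <= s * e0.
    by apply: ler_wpM2l; [exact: ltW | exact: ltW].
  have hY0 := nrm2_ge0 hip (xs n - u).
  move: hX hY h1a h1b td se0; move: (n.+1%:R^-1 : R) => a.
  move=> hX hY h1a h1b td se0.
  have : t * a <= t by rewrite ler_piMr // ltW.
  nra.
have horth n : phi n = 0 -> ip u n = 0.
  move=> pn; set w := ip u n.
  pose N := nrm2 ip n.
  have N0 : 0 <= N := nrm2_ge0 hip n.
  pose s := (N + 1)^-1.
  have sp : 0 < s by rewrite invr_gt0 (ltr_wpDl N0 ltr01).
  have hsN : s * N = 1 - s by rewrite /s; field; rewrite gt_eqF // (ltr_wpDl N0 ltr01).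
  pose c : R[i] := Complex (- s * Re w) (- s * Im w).
  have Ac : A (u + c *: n) by rewrite /A /= phiD phiZ pn mulr0 addr0.
  have := le_trans hmin (dle _ Ac).
  rewrite (nrm2DZ hip) /cabs2 /c; csimp; rewrite -/N => h.
  apply: cabs2_eq0; rewrite /cabs2.
  have q0 : 0 <= Re w ^+ 2 + Im w ^+ 2 by rewrite addr_ge0 // sqr_ge0.
  move: h q0 hsN sp; move: (Re w) (Im w) => a b h q0 hsN sp.
  have h' : 0 <= s * (a ^+ 2 + b ^+ 2) * (s * N - 2).
    nra.
  rewrite hsN in h'.
  have : s * (a ^+ 2 + b ^+ 2) <= 0 by nra.
  by rewrite pmulr_rle0 // => hq; apply/eqP; rewrite eq_le hq q0.
have un0 : nrm2 ip u != 0.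
  apply/eqP => h0; move: hu1; rewrite (@nrm2_eq0 _ _ _ hip u h0) phi0 => /eqP.
  by rewrite eq_sym oner_eq0.
pose z0 : H := (Complex ((nrm2 ip u)^-1) 0) *: u.
exists z0 => y; rewrite /z0.
have hy : phi (y - phi y *: u) = 0 by rewrite phiB phiZ hu1 mulr1 subrr.
have := horth _ hy; rewrite (ipBr hip) (ipZr hip) (ipxx hip) => /eqP; rewrite subr_eq0 => /eqP h'.
rewrite (ipZr hip) (ipC hip u y) h'.
apply: cext; csimp; field; exact: un0.
Qed.
End Riesz.

Section Integ.
Context {R : realType} {d : measure_display} {Omega : measurableType d}
  (mu : {measure set Omega -> \bar R}).

Lemma int_of_le (h : Omega -> R) (v : R) : measurable_fun setT h -> (forall w, 0 <= h w) ->
  (\int[mu]_(w in setT) (h w)%:E <= v%:E)%E -> mu.-integrable setT (EFin \o h).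
Proof.
move=> mh h0 e; apply/integrableP; split; first exact/measurable_realfun.measurable_EFinP.
under eq_integral => w _ do rewrite gee0_abs ?lee_fin //.
exact: le_lt_trans e (ltry _).
Qed.

Lemma int_comb (h1 h2 : Omega -> R) (v1 v2 : R) :
  mu.-integrable setT (EFin \o h1) -> mu.-integrable setT (EFin \o h2) ->
  (\int[mu]_(w in setT) (h1 w)%:E = v1%:E)%E -> (\int[mu]_(w in setT) (h2 w)%:E = v2%:E)%E ->
  mu.-integrable setT (fun w => ((h1 w - h2 w) / 4)%:E) /\
  (\int[mu]_(w in setT) ((h1 w - h2 w) / 4)%:E = ((v1 - v2) / 4)%:E)%E.
Proof.
move=> i1 i2 e1 e2.
have iB := integrableB measurableT i1 i2.
have iZ := integrableZl measurableT (4^-1) iB.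
have eqf w : ((h1 w - h2 w) / 4)%:E = ((4^-1)%:E * ((EFin \o h1) \- (EFin \o h2)) w)%E.
  by rewrite /= -EFinB -EFinM mulrC.
split.
  by apply: eq_integrable iZ => // w _; rewrite eqf.
under eq_integral => w _ do rewrite eqf.
rewrite integralZl //= integralB_EFin // e1 e2 -EFinB -EFinM mulrC.
by [].
Qed.
End Integ.

Section Frame.
Context {R : realType} {H : lmodType R[i]} {ip : H -> H -> R[i]} (hip : is_inner_product ip)
  {d : measure_display} {Omega : measurableType d} (mu : {measure set Omega -> \bar R})
  (K Kadj : H -> H) (hKadj : is_adjoint ip K Kadj)
  (F : Omega -> H) (hF : parseval_cont_Kframe ip mu Kadj F).
Local Notation Re := complex.Re.
Local Notation Im := complex.Im.

Lemma KadjL c a b : Kadj (c *: a + b) = c *: Kadj a + Kadj b.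
Proof.
apply: (ip_ext hip) => x.
by rewrite -hKadj (ipDr hip) (ipZr hip) (ipDr hip) (ipZr hip) -!hKadj.
Qed.

Lemma Kadj0 : Kadj 0 = 0.
Proof. by apply: (ip_ext hip) => x; rewrite -hKadj !(ip0r hip). Qed.
Lemma KadjD x y : Kadj (x + y) = Kadj x + Kadj y.
Proof. by rewrite -[x]scale1r KadjL !scale1r. Qed.
Lemma KadjZ c x : Kadj (c *: x) = c *: Kadj x.
Proof. by rewrite -[c *: x]addr0 KadjL Kadj0 addr0. Qed.
Lemma KadjB x y : Kadj (x - y) = Kadj x - Kadj y.
Proof. by rewrite -scaleN1r KadjD KadjZ scaleN1r. Qed.

Lemma sfun_meas x : measurable_fun setT (fun w => cabs2 (ip x (F w))).
Proof.
have [m1 m2] := hF.1 x.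
by rewrite /cabs2; apply: measurable_realfun.measurable_funD; apply: measurable_realfun.measurable_funX.
Qed.

Lemma sfun_int x : mu.-integrable setT (fun w => (cabs2 (ip x (F w)))%:E) /\
  (\int[mu]_(w in setT) (cabs2 (ip x (F w)))%:E = (nrm2 ip (Kadj x))%:E)%E.
Proof.
have e := hF.2 x; split => //.
apply: (@int_of_le _ _ _ mu _ (nrm2 ip (Kadj x))) => //.
- exact: sfun_meas.
- by move=> w; exact: cabs2_ge0.
- by rewrite /sq_coeff_int in e; rewrite e.
Qed.

Lemma polar a b : cintegrable mu (fun w => ip a (F w) * ip (F w) b) /\
  cintegral mu (fun w => ip a (F w) * ip (F w) b) = ip (Kadj a) (Kadj b).
Proof.
have eRe w : Re (ip a (F w) * ip (F w) b) =
    (cabs2 (ip (a + b) (F w)) - cabs2 (ip (a - b) (F w))) / 4.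
  by rewrite (ipDl hip) (ipBl hip) (ipC hip b (F w)) /cabs2; csimp; field.
have eIm w : Im (ip a (F w) * ip (F w) b) =
    (cabs2 (ip (a + 'i%C *: b) (F w)) - cabs2 (ip (a + (- 'i%C) *: b) (F w))) / 4.
  by rewrite !(ipDl hip) !(ipZl hip) (ipC hip b (F w)) /cabs2; csimp; field.
have [i1 e1] := sfun_int (a + b).
have [i2 e2] := sfun_int (a - b).
have [i3 e3] := sfun_int (a + 'i%C *: b).
have [i4 e4] := sfun_int (a + (- 'i%C) *: b).
have [iR eR] := @int_comb _ _ _ mu _ _ _ _ i1 i2 e1 e2.
have [iI eI] := @int_comb _ _ _ mu _ _ _ _ i3 i4 e3 e4.
split; first split.
- by apply: eq_integrable iR => // w _; rewrite eRe.
- by apply: eq_integrable iI => // w _; rewrite eIm.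
rewrite /cintegral.
under eq_integral => w _ do rewrite eRe.
under [X in Complex _ (fine X)]eq_integral => w _ do rewrite eIm.
rewrite eR eI /=.
rewrite KadjD KadjB !KadjD !KadjZ (nrm2D hip) (nrm2B hip) !(nrm2DZ hip).
by apply: cext; rewrite /cabs2; csimp; field.
Qed.
End Frame.

Section Integ2.
Context {R : realType} {d : measure_display} {Omega : measurableType d}
  (mu : {measure set Omega -> \bar R}).
Lemma int_lin (h1 h2 : Omega -> R) (v1 v2 c1 c2 : R) :
  mu.-integrable setT (EFin \o h1) -> mu.-integrable setT (EFin \o h2) ->
  (\int[mu]_(w in setT) (h1 w)%:E = v1%:E)%E -> (\int[mu]_(w in setT) (h2 w)%:E = v2%:E)%E ->
  mu.-integrable setT (fun w => (c1 * h1 w + c2 * h2 w)%:E) /\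
  (\int[mu]_(w in setT) (c1 * h1 w + c2 * h2 w)%:E = (c1 * v1 + c2 * v2)%:E)%E.
Proof.
move=> i1 i2 e1 e2.
have j1 : mu.-integrable setT (EFin \o (fun w => c1 * h1 w)).
  by apply: eq_integrable (integrableZl measurableT c1 i1) => // w _.
have j2 : mu.-integrable setT (EFin \o (fun w => c2 * h2 w)).
  by apply: eq_integrable (integrableZl measurableT c2 i2) => // w _.
have iD := integrableD measurableT j1 j2.
split.
  by apply: eq_integrable iD => // w _; rewrite /= EFinD.
have := integralD_EFin measurableT j1 j2.
have eq1 : (\int[mu]_(w in setT) (EFin \o (fun w => (c1 * h1 w)%R)) w = ((c1 * v1)%R)%:E)%E.
  under eq_integral => w _ do rewrite /= EFinM.
  by rewrite integralZl // e1 EFinM.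
have eq2 : (\int[mu]_(w in setT) (EFin \o (fun w => (c2 * h2 w)%R)) w = ((c2 * v2)%R)%:E)%E.
  under eq_integral => w _ do rewrite /= EFinM.
  by rewrite integralZl // e2 EFinM.
rewrite eq1 eq2 -EFinD => <-.
by apply: eq_integral => w _; rewrite /= EFinD.
Qed.
End Integ2.

Section Adj.
Context {R : realType} {H : lmodType R[i]} {ip : H -> H -> R[i]} (hip : is_inner_product ip)
  (hc : is_complete ip).
Lemma adj_exists (T : H -> H) : bounded_op ip T ->
  exists Z : H -> H, forall f y, ip (Z f) y = ip f (T y).
Proof.
case=> hlin [M hM].
suff hz f : exists z, forall y, ip z y = ip f (T y).
  by have [Z hZ] := choice hz; exists Z.
have h1 : forall a x y, (fun y => ip (T y) f) (a *: x + y) =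
    a * (fun y => ip (T y) f) x + (fun y => ip (T y) f) y.
  by move=> a x y; rewrite /= hlin (ipDZl hip).
have h2 : forall y, cabs2 ((fun y => ip (T y) f) y) <= (M * nrm2 ip f) * nrm2 ip y.
  move=> y; apply: le_trans (cauchy_schwarz hip (T y) f) _.
  rewrite mulrAC; apply: ler_wpM2r; [exact: nrm2_ge0 | exact: hM].
have [z hz] := riesz hip hc _ _ h1 h2.
by exists z => y; rewrite (ipC hip y z) -hz -(ipC hip).
Qed.
End Adj.


Local Close Scope classical_set_scope.

Theorem theorem3p4 (R : realType) (H : lmodType R[i]) (ip : H -> H -> R[i])
    (hH : is_sep_hilbert ip)
    (d : measure_display) (Omega : measurableType d)
    (mu : {measure set Omega -> \bar R})
    (K Kadj Kdag : H -> H)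
    (hK : bounded_op ip K) (hKcl : closed_range ip K)
    (hKadj : is_adjoint ip K Kadj) (hKdag : is_MP_inverse ip K Kdag)
    (F : Omega -> H) (hF : parseval_cont_Kframe ip mu Kadj F) :
  dual_cont_KBessel ip mu K F (fun w => Kdag (F w)) /\
  forall G : Omega -> H, dual_cont_KBessel ip mu K F G ->
    (analysis_opnorm2 ip mu (fun w => Kdag (F w)) <= analysis_opnorm2 ip mu G)%E.
Proof.
case: hH => hip hc _.
case: hKdag => hbd p1 p2 p3 p4.
have [Z hZ] := adj_exists hip hc _ hbd.
have KZ f : Kadj (Z f) = Kdag (K f).
  apply: (ip_ext hip) => x.
  by rewrite -hKadj (ipC hip) hZ -(ipC hip) p4.
have sqKF f : sq_coeff_int ip mu (fun w => Kdag (F w)) f = (nrm2 ip (Kdag (K f)))%:E.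
  rewrite /sq_coeff_int; under eq_integral => w _ do rewrite -hZ.
  by rewrite (sfun_int mu Kadj F hF (Z f)).2 KZ.
split.
  split.
    split.
      move=> f; have [m1 m2] := hF.1 (Z f).
      by split; [apply: eq_measurable_fun m1 | apply: eq_measurable_fun m2] => w _; rewrite hZ.
    case: hbd => _ [MD hMD]; case: hK => _ [MK hMK].
    exists (`|MD| * `|MK| + 1); split; first by rewrite ltr_wpDl // mulr_ge0.
    move=> f; rewrite sqKF lee_fin.
    have h1 := hMD (K f); have h2 := hMK f.
    have n1 := nrm2_ge0 hip (K f); have n2 := nrm2_ge0 hip f.
    have n3 : MD * nrm2 ip (K f) <= `|MD| * nrm2 ip (K f).
      by apply: ler_wpM2r => //; exact: ler_norm.
    have n4 : MK * nrm2 ip f <= `|MK| * nrm2 ip f.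
      by apply: ler_wpM2r => //; exact: ler_norm.
    have a0 := normr_ge0 MD; have b0 := normr_ge0 MK.
    nra.
  move=> f g.
  have -> : (fun w => ip f (Kdag (F w)) * ip (F w) g) = (fun w => ip (Z f) (F w) * ip (F w) g).
    by apply: funext => w; rewrite hZ.
  have [hi he] := polar hip mu K Kadj hKadj F hF (Z f) g.
  split => //; rewrite he KZ -hKadj p1 //.
move=> G [[wmG [B [Bp hB]]] hdual].
apply: ge_ereal_sup => _ [f hf <-].
have hsup : (sq_coeff_int ip mu G f <= analysis_opnorm2 ip mu G)%E.
  by apply: ereal_sup_ubound; exists f.
apply: le_trans hsup.
pose z := Z f.
pose P := Kdag (K f).
have hPP : ip P P = ip f P by rewrite /P p4 p2.
have hN : complex.Re (ip (K f) z) = nrm2 ip P.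
  by rewrite (ipC hip z (K f)) /z hZ ReJ -/P /nrm2 hPP.
have [[iRe iIm] hv] := hdual f z.
have hrho : (\int[mu]_(w in setT)
    (complex.Re (ip f (G w) * ip (F w) z))%:E = (nrm2 ip P)%:E)%E.
  have fin := integrable_fin_num measurableT iRe.
  have e : complex.Re (ip (K f) z) =
      fine (\int[mu]_(w in setT) (complex.Re (ip f (G w) * ip (F w) z))%:E)%E.
    by rewrite hv.
  by rewrite -(fineK fin) -e hN.
have iG : mu.-integrable setT (EFin \o (fun w => cabs2 (ip f (G w)))).
  apply: (@int_of_le _ _ _ mu _ (B * nrm2 ip f)).
  - have [m1 m2] := wmG f.
    by rewrite /cabs2; apply: measurable_realfun.measurable_funD;
      apply: measurable_realfun.measurable_funX.
  - by move=> w; exact: cabs2_ge0.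
  - exact: hB.
have [iA eA] := sfun_int mu Kadj F hF z.
rewrite KZ -/P in eA.
have [ic ec] := int_lin mu (fun w => complex.Re (ip f (G w) * ip (F w) z))
  (fun w => cabs2 (ip z (F w))) (nrm2 ip P) (nrm2 ip P) 2 (-1) iRe iA hrho eA.
rewrite sqKF -/P.
have -> : (nrm2 ip P)%:E = ((2 * nrm2 ip P + (-1) * nrm2 ip P)%R)%:E by congr EFin; ring.
rewrite -ec.
apply: (le_integral measurableT ic iG) => w _; rewrite lee_fin.
rewrite (ipC hip z (F w)) /cabs2; csimp.
move: (complex.Re (ip f (G w))) (complex.Im (ip f (G w)))
  (complex.Re (ip z (F w))) (complex.Im (ip z (F w))) => g1 g2 a1 a2.
have := sqr_ge0 (g1 - a1); have := sqr_ge0 (g2 - a2); nra.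
Qed.
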